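(* Let $\mathcal X$ and $\mathcal Y$ be Banach spaces with a continuous embedding $\mathcal Y\subset\mathcal X^*$. Let $\mathcal U\subset\mathcal X$ be open, $\mathcal E:\mathcal U\to\mathbb R$ a $C^2$ function, and $x_\infty\in\mathcal U$ with $\mathcal E'(x_\infty)=0$. Let $\mathcal M:\mathcal U\to\mathcal Y$ be a $C^1$ gradient map for $\mathcal E$ and suppose $\mathcal E$ is Morse–Bott at $x_\infty$, so that $\mathcal U\cap\mathrm{Crit}\,\mathcal E$ is a relatively open smooth submanifold of $\mathcal X$ and $K:=\mathrm{Ker}\,\mathcal E''(x_\infty)=T_{x_\infty}\mathrm{Crit}\,\mathcal E$. Assume that $K$ has a closed complement $\mathcal X_0\subset\mathcal X$ and that $\mathrm{Ran}\,\mathcal M'(x_\infty)\subset\mathcal Y$ is closed. Then there are constants $Z\in(0,\infty)$ and $\sigma\in(0,1]$ such that every $x\in\mathcal U$ with $\|x-x_\infty\|_{\mathcal X}<\sigma$ satisfies $$\|\mathcal M(x)\|_{\mathcal Y}\geq Z\,|\mathcal E(x)-\mathcal E(x_\infty)|^{1/2}.$$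
   Context: Gradient map: a continuous map $\mathcal M:\mathcal U\to\mathcal Y$ is a gradient map for a $C^1$ function $\mathcal E$ if $\mathcal E'(x)v=\langle v,\mathcal M(x)\rangle_{\mathcal X\times\mathcal X^*}$ for all $x\in\mathcal U$, $v\in\mathcal X$. $\mathrm{Crit}\,\mathcal E=\{x:\mathcal E'(x)=0\}$; $\mathcal E''(x):\mathcal X\to\mathcal X^*$ is the Hessian. $\mathcal E$ is Morse–Bott at $x_0$ if some open neighborhood $\mathcal U$ of $x_0$ has $\mathcal U\cap\mathrm{Crit}\,\mathcal E$ a relatively open smooth submanifold and $T_{x_0}\mathrm{Crit}\,\mathcal E=\mathrm{Ker}\,\mathcal E''(x_0)$. *)

(* Defs.v *)
From HB Require Import structures.
From mathcomp Require Import all_boot all_order all_algebra.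
From mathcomp Require Import all_classical all_reals all_analysis.
Set Implicit Arguments. Unset Strict Implicit. Unset Printing Implicit Defensive.
Import Order.TTheory GRing.Theory Num.Theory.
Import numFieldNormedType.Exports.
Local Open Scope classical_set_scope.
Local Open Scope ring_scope.

(* Fréchet C^m / C^oo maps between normed spaces, via towers of        *)
(* bounded multilinear derivatives.  D k x t is the k-th Fréchet       *)
(* derivative of f at x applied to the k-tuple t (as a seq of length k).*)
(* Operator norms are expressed by uniformity over unit vectors.       *)

Definition unit_tuple (R : realType) (V : normedModType R) (k : nat) (t : seq V) :=
  size t = k /\ all (fun v => `|v| <= 1) t.

Definition multilinear (R : realType) (V W : normedModType R) (k : nat)
  (A : seq V -> W) :=
  forall (pre post : seq V), (size pre + size post).+1 = k ->
  forall (a : R) (u v : V),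
    A (pre ++ (a *: u + v) :: post) = a *: A (pre ++ u :: post) + A (pre ++ v :: post).

Definition bounded_multilinear (R : realType) (V W : normedModType R) (k : nat)
  (A : seq V -> W) :=
  exists C : R, forall t : seq V, size t = k -> `|A t| <= C * \prod_(v <- t) `|v|.

(* D is the tower of derivatives of f of orders 0..m on the set U, the  *)
(* m-th one being continuous (for the operator norm): f is C^m on U.    *)
Definition deriv_data (R : realType) (V W : normedModType R) (m : nat)
  (U : set V) (f : V -> W) (D : nat -> V -> seq V -> W) : Prop :=
  [/\ (forall x, U x -> D 0%N x [::] = f x),
      (forall (k : nat) x, (k <= m)%N -> U x ->
          multilinear k (D k x) /\ bounded_multilinear k (D k x)),
      (forall (k : nat) x, (k < m)%N -> U x -> forall e : R, 0 < e ->
          exists2 d : R, 0 < d & forall y, U y -> `|y - x| < d ->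
            forall t, unit_tuple k t ->
              `|D k y t - D k x t - D k.+1 x ((y - x) :: t)| <= e * `|y - x|)
    & (forall x, U x -> forall e : R, 0 < e ->
          exists2 d : R, 0 < d & forall y, U y -> `|y - x| < d ->
            forall t, unit_tuple m t -> `|D m y t - D m x t| <= e)].

Definition smooth_deriv (R : realType) (V W : normedModType R)
  (U : set V) (f : V -> W) (D : nat -> V -> seq V -> W) : Prop :=
  forall m : nat, deriv_data m U f D.

Definition smooth_on (R : realType) (V W : normedModType R) (U : set V) (f : V -> W) :=
  exists D, smooth_deriv U f D.

Definition lin_subspace (R : realType) (V : normedModType R) (F : set V) :=
  F 0 /\ forall (a : R) u v, F u -> F v -> F (a *: u + v).

Definition closed_subspace (R : realType) (V : normedModType R) (F : set V) :=
  lin_subspace F /\ closed F.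

Definition closed_complement (R : realType) (V : normedModType R) (K X0 : set V) :=
  [/\ closed_subspace X0, K `&` X0 = [set 0]
    & forall x, exists k x0, [/\ K k, X0 x0 & x = k + x0]].

Definition submanifold_chart (R : realType) (X : normedModType R) (S : set X) (p : X)
  (V W : set X) (phi psi : X -> X) (Dphi : nat -> X -> seq X -> X) (F : set X) :=
  [/\ open V, V p, open W, smooth_deriv V phi Dphi & smooth_on W psi] /\
  [/\ (forall x, V x -> W (phi x) /\ psi (phi x) = x),
      (forall y, W y -> V (psi y) /\ phi (psi y) = y),
      closed_subspace F
    & phi @` (S `&` V) = W `&` F].

Definition smooth_submanifold (R : realType) (X : normedModType R) (S : set X) :=
  forall p, S p -> exists V W phi psi Dphi F, @submanifold_chart R X S p V W phi psi Dphi F.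

(* T is the tangent space of S at p: T = (phi'(p))^{-1}(F) for a chart *)
(* (this is independent of the chart).                                 *)
Definition is_tangent_space (R : realType) (X : normedModType R) (S : set X) (p : X)
  (T : set X) :=
  exists V W phi psi Dphi F, @submanifold_chart R X S p V W phi psi Dphi F /\
    T = [set v | F (Dphi 1%N p [:: v])].

(* j y is the continuous linear functional on X corresponding to y.    *)

Definition continuous_embedding_dual (R : realType) (X Y : normedModType R)
  (j : Y -> X -> R) :=
  [/\ (forall (a : R) y y' x, j (a *: y + y') x = a * j y x + j y' x),
      (forall (a : R) y x x', j y (a *: x + x') = a * j y x + j y x'),
      (exists C : R, forall y x, `|j y x| <= C * `|y| * `|x|)
    & (forall y, (forall x, j y x = 0) -> y = 0)].

Definition gradient_map (R : realType) (X Y : normedModType R) (j : Y -> X -> R)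
  (U : set X) (DE : nat -> X -> seq X -> R) (M : X -> Y) :=
  {within U, continuous M} /\
  forall x, U x -> forall v, DE 1%N x [:: v] = j (M x) v.

Definition crit_set (R : realType) (X : normedModType R) (U : set X)
  (DE : nat -> X -> seq X -> R) : set X :=
  [set x | U x /\ forall v, DE 1%N x [:: v] = 0].

Definition hessian_kernel (R : realType) (X : normedModType R)
  (DE : nat -> X -> seq X -> R) (x : X) : set X :=
  [set v | forall w, DE 2%N x [:: v; w] = 0].

Definition morse_bott_at (R : realType) (X : normedModType R) (U : set X)
  (DE : nat -> X -> seq X -> R) (x0 : X) :=
  smooth_submanifold (crit_set U DE) /\
  is_tangent_space (crit_set U DE) x0 (hessian_kernel DE x0).

(* Main.v *)
Require Import Defs.
From HB Require Import structures.
From mathcomp Require Import all_boot all_order all_algebra.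
From mathcomp Require Import all_classical all_reals all_analysis.
From mathcomp Require Import ring lra.
Import Order.TTheory GRing.Theory Num.Theory.
Import numFieldNormedType.Exports.
Local Open Scope classical_set_scope.
Local Open Scope ring_scope.

Set Implicit Arguments. Unset Strict Implicit. Unset Printing Implicit Defensive.

Section MVI.
Variable R : realType.

Lemma mvi1 (Z : normedModType R) (h : R -> Z) (B : R) : 0 <= B ->
  (forall t, 0 <= t <= 1 -> forall e, 0 < e -> exists2 d, 0 < d &
     forall t', 0 <= t' <= 1 -> `|t' - t| < d -> `|h t' - h t| <= (B + e) * `|t' - t|) ->
  `|h 1 - h 0| <= B.
Proof.
move=> B0 Hh; apply/ler_addgt0Pr => e e0.
pose G := [set s : R | 0 <= s <= 1 /\ forall u, 0 <= u <= s -> `|h u - h 0| <= (B + e) * u].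
have G0 : G 0.
  split; first by rewrite lexx ler01.
  move=> u /andP[u0 u1]; have -> : u = 0 by apply/le_anti; rewrite u0 u1.
  by rewrite subrr normr0 mulr0.
have hsG : has_sup G.
  split; first by exists 0.
  by exists 1 => s [/andP[]].
set s := sup G.
have s0 : 0 <= s by apply: sup_upper_bound.
have s1 : s <= 1 by apply: ge_sup; [exists 0 | move=> x [/andP[]]].
have Gs : G s.
  split; first by rewrite s0 s1.
  have Hlt : forall u, 0 <= u < s -> `|h u - h 0| <= (B + e) * u.
    move=> u /andP[u0 us].
    have [g [_ Hg] ug] : exists2 g, G g & s - (s - u) < g.
      by apply: sup_adherent => //; rewrite subr_gt0.
    apply: Hg; rewrite u0 /=; apply: ltW; move: ug; by rewrite opprB addrCA subrr addr0.
  move=> u /andP[u0 us].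
  have [us'|su] := ltP u s; first by apply: Hlt; rewrite u0.
  have {su us} -> : u = s by apply/le_anti; rewrite us su.
  have [->|sn0] := eqVneq s 0; first by rewrite subrr normr0 mulr0.
  have sp : 0 < s by rewrite lt_neqAle eq_sym sn0 s0.
  have [d d0 Hd] := Hh s (ltac:(by rewrite s0 s1)) e e0.
  pose u' := Num.max 0 (s - d / 2).
  have u'0 : 0 <= u' by rewrite le_max lexx.
  have u's : u' < s by rewrite gt_max sp /=; lra.
  have su' : s - u' < d.
    have : s - d / 2 <= u' by rewrite le_max lexx orbT.
    lra.
  have H1 := Hlt u' (ltac:(by rewrite u'0 u's)).
  have H2 := Hd u' (ltac:(rewrite u'0 /=; lra)) (ltac:(rewrite distrC ger0_norm; lra)).
  rewrite (distrC u') ger0_norm in H2; last lra.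
  apply: (le_trans (ler_distD (h u') _ _)).
  have -> : (B + e) * s = (B + e) * (s - u') + (B + e) * u' by ring.
  by apply: lerD => //; rewrite distrC.
have s1' : s = 1.
  apply/le_anti; rewrite s1 /=; rewrite leNgt; apply/negP => s1'.
  have [d d0 Hd] := Hh s (ltac:(by rewrite s0 s1)) e e0.
  pose t' := Num.min 1 (s + d / 2).
  have st' : s < t' by rewrite lt_min s1' /=; lra.
  have t'1 : t' <= 1 by rewrite ge_min lexx.
  have t'sd : t' <= s + d / 2 by rewrite ge_min lexx orbT.
  have Gt' : G t'.
    split; first by rewrite t'1 andbT; lra.
    move=> u /andP[u0 ut'].
    have [us|su] := leP u s; first by case: Gs => _; apply; rewrite u0.
    have H1 : `|h s - h 0| <= (B + e) * s by case: Gs => _; apply; rewrite s0 lexx.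
    have H2 := Hd u (ltac:(rewrite u0 /=; lra)) (ltac:(rewrite ger0_norm; lra)).
    rewrite ger0_norm in H2; last lra.
    apply: (le_trans (ler_distD (h s) _ _)).
    have -> : (B + e) * u = (B + e) * (u - s) + (B + e) * s by ring.
    by apply: lerD.
  have := sup_upper_bound hsG Gt'; rewrite -/s; lra.
case: Gs => _ /(_ 1); rewrite -s1' lexx s0 => /(_ isT).
by rewrite s1' mulr1.
Qed.

End MVI.

Section MVI2.
Variable R : realType.

Lemma mvi_seg (X Z : normedModType R) (O : set X) (f : X -> Z) (Df : X -> X -> Z)
  (x y : X) (B : R) :
  0 <= B ->
  (forall t, 0 <= t <= 1 -> O (x + t *: (y - x))) ->
  (forall t, 0 <= t <= 1 ->
     (forall e, 0 < e -> exists2 d, 0 < d & forall z', O z' ->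
        `|z' - (x + t *: (y - x))| < d ->
        `|f z' - f (x + t *: (y - x)) - Df (x + t *: (y - x)) (z' - (x + t *: (y - x)))|
          <= e * `|z' - (x + t *: (y - x))|)
     /\ (forall a : R, `|Df (x + t *: (y - x)) (a *: (y - x))| <= B * `|a| * `|y - x|)) ->
  `|f y - f x| <= B * `|y - x|.
Proof.
move=> B0 HO Hd.
pose h t := f (x + t *: (y - x)).
have -> : f y = h 1 by rewrite /h scale1r addrC subrK.
have -> : f x = h 0 by rewrite /h scale0r addr0.
apply: mvi1; first by apply: mulr_ge0 => //.
move=> t t01 e e0.
set N := `|y - x| + 1.
have N0 : 0 < N by rewrite /N; apply: ltr_wpDl.
have [d d0 Hdd] := (Hd t t01).1 (e / N) (divr_gt0 e0 N0).
have HB := (Hd t t01).2.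
exists (d / N); first exact: divr_gt0.
move=> t' t'01 tt'.
set z := x + t *: (y - x).
have zz : x + t' *: (y - x) - z = (t' - t) *: (y - x).
  by rewrite /z scalerBl opprD addrACA subrr add0r.
have nz : `|x + t' *: (y - x) - z| = `|t' - t| * `|y - x|.
  by rewrite zz normrZ.
have nzd : `|x + t' *: (y - x) - z| < d.
  rewrite nz; apply: (le_lt_trans (y := `|t' - t| * N)).
    by apply: ler_wpM2l => //; rewrite /N lerDl.
  by rewrite -ltr_pdivlMr.
have H1 := Hdd _ (HO t' t'01) nzd.
rewrite /h -/z.
set fz' := f (x + t' *: (y - x)).
set L := Df z (x + t' *: (y - x) - z).
have H2 : `|L| <= B * `|t' - t| * `|y - x| by rewrite /L zz; apply: HB.
have : `|fz' - f z| <= `|fz' - f z - L| + `|L|.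
  by rewrite -{1}(subrK L (fz' - f z)) ler_normD.
have H3 : e / N * `|x + t' *: (y - x) - z| <= e * `|t' - t|.
  rewrite nz.
  have -> : e / N * (`|t' - t| * `|y - x|) = e * `|t' - t| * (`|y - x| / N) by ring.
  rewrite -[X in _ <= X]mulr1; apply: ler_wpM2l; first by apply: mulr_ge0 => //; exact: ltW.
  by rewrite ler_pdivrMr // mul1r /N lerDl.
move: H1 H2 H3; rewrite -/fz' -/L.
set a := `|fz' - f z - L|; set b := `|L|; set c := `|fz' - f z|.
move=> H1 H2 H3 H4.
have : (B * `|y - x| + e) * `|t' - t| = B * `|t' - t| * `|y - x| + e * `|t' - t| by ring.
lra.
Qed.
End MVI2.

Section Baire2.
Variable R : realType.

Lemma nat_inv_lt (e : R) : 0 < e -> exists k : nat, (k.+1%:R)^-1 < e.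
Proof.
move=> e0; exists (Num.trunc e^-1).
by rewrite -ltf_pV2 ?(posrE,divr_gt0)// ?invr_gt0 // invrK truncnS_gt.
Qed.

Lemma cauchy_seq_lim (U : completeNormedModType R) (a : nat -> U) (r : nat -> R) :
  (forall k m, (k <= m)%N -> `|a m - a k| <= r k) ->
  (forall e, 0 < e -> exists k, r k < e) ->
  exists l, forall k, `|l - a k| <= r k.
Proof.
move=> Ha Hr.
have : cvg (a @ \oo).
  suff : cauchy (a @ \oo) by exact: cauchy_cvg.
  suff : cauchy_ex (a @ \oo) by exact: cauchy_exP.
  move=> e e0; rewrite /fmapE -ball_normE /ball_.
  have [n rn] := Hr e e0.
  exists (a n), n => // m nm /=.
  rewrite distrC; exact: le_lt_trans (Ha n m nm) rn.
rewrite cvg_ex /= => -[l /cvgrPdist_lt Hl].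
exists l => k; apply/ler_addgt0Pr => e e0.
have [N _ HN] := Hl e e0.
have Nk : (N <= maxn N k)%N by rewrite leq_maxl.
have := HN _ Nk => /= H1.
have H2 := Ha k (maxn N k) (leq_maxr N k).
apply: (le_trans (ler_distD (a (maxn N k)) _ _)).
rewrite addrC; apply: lerD => //; exact: ltW.
Qed.

End Baire2.

Section Baire3.
Variable R : realType.

Definition eclosed (U : normedModType R) (C : U -> Prop) :=
  forall y, (forall e, 0 < e -> exists2 z, C z & `|y - z| < e) -> C y.

Lemma baire_closed (U : completeNormedModType R) (C : U -> Prop) (F : nat -> U -> Prop) :
  eclosed C -> (forall n, eclosed (F n)) ->
  (exists c, C c) ->
  (forall y, C y -> exists n, F n y) ->
  exists n c r, [/\ C c, 0 < r & forall y, C y -> `|y - c| < r -> F n y].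
Proof.
move=> Ccl Fcl [c0 Cc0] Hcov.
apply/not_existsP => Hno.
have Hstep : forall n c r, C c -> 0 < r -> exists y, exists2 rho, 0 < rho &
    [/\ C y, `|y - c| < r & forall z, `|z - y| < rho -> ~ F n z].
  move=> n c r Cc r0.
  have : ~ (forall y, C y -> `|y - c| < r -> F n y).
    by move=> H; apply: (Hno n); exists c, r; split.
  move=> /existsNP [y /not_implyP [Cy /not_implyP [yc nFy]]].
  exists y.
  have : ~ (forall e, 0 < e -> exists2 z, F n z & `|y - z| < e).
    by move=> H; apply: nFy; apply: Fcl.
  move=> /existsNP [rho /not_implyP [rho0 Hrho]].
  exists rho => //; split => // z zy Fz; apply: Hrho; exists z => //.
  by rewrite distrC.
pose P (k : nat) (cr : U * R) (cr' : U * R) :=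
  [/\ C cr'.1, 0 < cr'.2, cr'.2 <= cr.2 / 2, `|cr'.1 - cr.1| <= cr.2 / 2
    & forall z, `|z - cr'.1| <= cr'.2 -> ~ F k z].
have Ar : forall kcr : nat * (U * R), exists cr', (C kcr.2.1 /\ 0 < kcr.2.2) -> P kcr.1 kcr.2 cr'.
  move=> [k [c r]] /=.
  case: (pselect (C c /\ 0 < r)); last by move=> H; exists (c, r).
  move=> [Cc r0].
  have [y [rho rho0 [Cy yc nF]]] := Hstep k c (r / 2) Cc (divr_gt0 r0 (ltr0Sn _ 1)).
  exists (y, Num.min (r / 2) (rho / 2)) => _; split => //=.
  - by rewrite lt_min divr_gt0 //= divr_gt0.
  - by rewrite ge_min lexx.
  - exact: ltW.
  - move=> z zy; apply: nF; apply: (le_lt_trans zy).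
    rewrite gt_min; apply/orP; right; rewrite ltr_pdivrMr //; lra.
have [f Pf] := choice Ar.
pose fix ar k := if k is p.+1 then f (p, ar p) else (c0, 1).
have Inv : forall k, C (ar k).1 /\ 0 < (ar k).2 /\ (ar k).2 <= (k.+1%:R)^-1.
  elim => [|k [Ck [rk0 rkb]]] /=; first by rewrite invr1 lexx ltr01.
  have [C1 r1 r1b _ _] := Pf (k, ar k) (conj Ck rk0).
  split => //; split => //.
  apply: (le_trans r1b); apply: (le_trans (y := (k.+1%:R)^-1 / 2)).
    by apply: ler_wpM2r => //; rewrite invr_ge0.
  rewrite -invfM lef_pV2 ?posrE ?mulr_gt0 // -natrM ler_nat.
  by rewrite muln2 -addnn addSn ltnS leq_addl.
have Step : forall k, P k (ar k) (ar k.+1).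
  move=> k; have [Ck [rk0 _]] := Inv k; exact: (Pf (k, ar k) (conj Ck rk0)).
have Nest : forall k i, `|(ar (k + i)%N).1 - (ar k).1| <= (ar k).2 - (ar (k + i)%N).2.
  move=> k; elim => [|i IH]; first by rewrite addn0 !subrr normr0.
  rewrite addnS.
  have [_ _ r1 d1 _] := Step (k + i)%N.
  apply: (le_trans (ler_distD (ar (k + i)%N).1 _ _)).
  lra.
have [l Hl] : exists l, forall k, `|l - (ar k).1| <= (ar k).2.
  apply: (cauchy_seq_lim (r := fun k => (ar k).2)).
    move=> k m km; rewrite -(subnKC km).
    have := Nest k (m - k)%N; have [_ [r0 _]] := Inv (k + (m - k))%N; lra.
  move=> e e0; have [k ke] := nat_inv_lt e0; exists k.
  have [_ [_ rb]] := Inv k; exact: le_lt_trans rb ke.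
have Cl : C l.
  apply: Ccl => e e0; have [k ke] := nat_inv_lt e0.
  have [Ck [_ rb]] := Inv k.
  exists (ar k).1 => //; exact: le_lt_trans (Hl k) (le_lt_trans rb ke).
have [n Fn] := Hcov l Cl.
have [_ _ _ _ nF] := Step n.
by apply: (nF l) => //; exact: Hl.
Qed.

End Baire3.

Section OpenMap.
Variable R : realType.

Lemma pow2_small (a e : R) : 0 < e -> exists k : nat, a / 2 ^+ k < e.
Proof.
move=> e0.
have [k hk] := nat_inv_lt (divr_gt0 e0 (ltr_wpDl (normr_ge0 a) (ltr01 : (0:R) < 1))).
exists k.
have p2 : 0 < (2 : R) ^+ k by apply: exprn_gt0.
have k2 : k.+1%:R <= (2 : R) ^+ k.
  by rewrite -natrX ler_nat; apply: ltn_expl.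
have k0 : (0 : R) < k.+1%:R by [].
rewrite ltr_pdivrMr //.
have h1 : a <= `|a| + 1 by apply: (le_trans (ler_norm a)); rewrite lerDl.
have : (`|a| + 1) < e * k.+1%:R.
  by move: hk; rewrite ltr_pdivlMr ?ltr_wpDl // mulrC ltr_pdivrMr.
move=> h2.
have h3 : e * k.+1%:R <= e * 2 ^+ k by apply: ler_wpM2l => //; exact: ltW.
lra.
Qed.

Lemma open_map (X Y : completeNormedModType R) (A : X -> Y) (cA : R) :
  0 <= cA ->
  (forall (a : R) u v, A (a *: u + v) = a *: A u + A v) ->
  (forall v, `|A v| <= cA * `|v|) ->
  eclosed (range A) ->
  exists2 C, 0 < C & forall v, exists k, A k = 0 /\ `|v - k| <= C * `|A v|.
Proof.
move=> cA0 Alin Abd Acl.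
have A0 : A 0 = 0.
  have h := Alin 1 0 0; rewrite scaler0 addr0 scale1r in h.
  by apply: (addrI (A 0)); rewrite addr0 -h.
have AZ : forall a u, A (a *: u) = a *: A u.
  by move=> a u; have := Alin a u 0; rewrite !addr0 A0 addr0.
have AD : forall u v, A (u + v) = A u + A v.
  by move=> u v; have := Alin 1 u v; rewrite !scale1r.
have AN : forall u, A (- u) = - A u.
  by move=> u; rewrite -scaleN1r AZ scaleN1r.
have AB : forall u v, A (u - v) = A u - A v by move=> u v; rewrite AD AN.
pose F (n : nat) (y : Y) := forall e, 0 < e -> exists v, `|v| <= n%:R /\ `|y - A v| < e.
have [n [c [r [Cc r0 Hcr]]]] : exists n c r, [/\ range A c, 0 < r &
    forall y, range A y -> `|y - c| < r -> F n y].
  apply: baire_closed => //.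
  - move=> k y Hy e e0.
    have [z Fz yz] := Hy (e / 2) (divr_gt0 e0 (ltr0Sn _ 1)).
    have [v [vn zv]] := Fz (e / 2) (divr_gt0 e0 (ltr0Sn _ 1)).
    exists v; split => //.
    apply: (le_lt_trans (ler_distD z _ _)); lra.
  - by exists (A 0), 0.
  - move=> y [v _ <-]; exists (Num.trunc `|v|).+1 => e e0; exists v; split.
      exact: ltW (truncnS_gt _).
    by rewrite subrr normr0.
pose C0 := 4 * n%:R / r.
have C00 : 0 <= C0 by rewrite /C0; apply: divr_ge0 => //; exact: ltW.
have Step2 : forall y, range A y -> forall e, 0 < e ->
    exists v, `|v| <= C0 * `|y| /\ `|y - A v| < e.
  move=> y Cy e e0.
  have [->|yn0] := eqVneq y 0.
    by exists 0; rewrite A0 subrr !normr0 mulr0 lexx.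
  have ny0 : 0 < `|y| by rewrite normr_gt0.
  pose s := r / (2 * `|y|).
  have s0 : 0 < s by rewrite /s divr_gt0 // mulr_gt0.
  have Cc' : range A (c + s *: y).
    by case: Cc => u _ <-; case: Cy => w _ <-; exists (u + s *: w) => //; rewrite AD AZ.
  have sy : `|s *: y| = r / 2.
    by rewrite normrZ gtr0_norm // /s; field; rewrite gt_eqF.
  have Hc1 := Hcr _ Cc' (ltac:(by rewrite addrC addKr sy; lra)).
  have Hc2 := Hcr _ Cc (ltac:(by rewrite subrr normr0)).
  have es0 : 0 < e * s / 2 by apply: divr_gt0 => //; apply: mulr_gt0.
  have [v1 [v1n H1]] := Hc1 _ es0.
  have [v2 [v2n H2]] := Hc2 _ es0.
  exists (s^-1 *: (v1 - v2)); split.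
    rewrite normrZ gtr0_norm ?invr_gt0 //.
    have : `|v1 - v2| <= 2 * n%:R.
      by apply: (le_trans (ler_normB _ _)); lra.
    move=> h; have -> : C0 * `|y| = s^-1 * (2 * n%:R).
      by rewrite /C0 /s; field; rewrite ?gt_eqF.
    by apply: ler_wpM2l => //; rewrite invr_ge0 ltW.
  have -> : y - A (s^-1 *: (v1 - v2)) = s^-1 *: ((c + s *: y - A v1) - (c - A v2)).
    rewrite AZ AB !scalerDr !scalerN scalerA mulVf ?gt_eqF // scale1r.
    rewrite scalerBr; set a := s^-1 *: c; set b := s^-1 *: A v1; set d := s^-1 *: A v2.
    rewrite !opprB [a + y]addrC -!addrA; congr (_ + _); by rewrite addrCA [a + (d - a)]addrC subrK addrC.
  rewrite normrZ gtr0_norm ?invr_gt0 //.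
  apply: (le_lt_trans (ler_wpM2l _ (ler_normB _ _))); first by rewrite invr_ge0 ltW.
  rewrite -ltr_pdivlMl ?invr_gt0 // invrK.
  have -> : s * e = e * s / 2 + e * s / 2 by field.
  exact: ltr_leD H1 (ltW H2).
have [g Hg] : exists g : Y * R -> X, forall y e, range A y -> 0 < e ->
    `|g (y, e)| <= C0 * `|y| /\ `|y - A (g (y, e))| < e.
  have : forall ye : Y * R, exists v, range A ye.1 -> 0 < ye.2 ->
      `|v| <= C0 * `|ye.1| /\ `|ye.1 - A v| < ye.2.
    move=> [y e] /=; case: (pselect (range A y /\ 0 < e)); last first.
      by move=> H; exists 0 => Cy e0; exfalso; apply: H.
    by move=> [Cy e0]; have [v Hv] := Step2 y Cy e e0; exists v.
  by move=> /choice [g Hg]; exists g => y e; apply: (Hg (y, e)).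
exists (2 * C0 + 1); first by apply: ltr_wpDl => //; apply: mulr_ge0.
move=> v0.
set y := A v0.
have [yz|yn0] := eqVneq y 0.
  by exists v0; split => //; rewrite subrr normr0 yz normr0 mulr0.
have ny0 : 0 < `|y| by rewrite normr_gt0.
pose q (k : nat) := `|y| / 2 ^+ k.
have qS : forall k, q k.+1 = q k / 2 by move=> k; rewrite /q exprS; field; rewrite expf_neq0.
have q0 : forall k, 0 < q k by move=> k; rewrite /q divr_gt0 // exprn_gt0.
pose fix w k := if k is p.+1 then w p + g (y - A (w p), q p.+1) else 0.
have Cres : forall k, range A (y - A (w k)).
  by move=> k; exists (v0 - w k) => //; rewrite AB.
have Res : forall k, `|y - A (w k)| <= q k.
  elim => [|k IH] /=; first by rewrite A0 subr0 /q expr0 divr1.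
  have [_ h] := Hg _ _ (Cres k) (q0 k.+1).
  by rewrite AD opprD addrA; apply: ltW.
have Inc : forall k, `|w k.+1 - w k| <= C0 * q k.
  move=> k /=; rewrite addrC addKr.
  have [h _] := Hg _ _ (Cres k) (q0 k.+1).
  apply: (le_trans h); apply: ler_wpM2l => //.
have Nest : forall k i, `|w (k + i)%N - w k| <= 2 * C0 * (q k - q (k + i)%N).
  move=> k; elim => [|i IH]; first by rewrite addn0 !subrr normr0 mulr0.
  rewrite addnS.
  apply: (le_trans (ler_distD (w (k + i)%N) _ _)).
  have := lerD (Inc (k + i)%N) IH; rewrite qS => h; apply: (le_trans h).
  by rewrite le_eqVlt; apply/orP; left; apply/eqP; field.
have [l Hl] := cauchy_seq_lim (r := fun k => 2 * C0 * q k) (a := w)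
  (ltac:(move=> kk mm km; rewrite -(subnKC km);
         apply: (le_trans (Nest kk (mm - kk)%N)); apply: ler_wpM2l;
         [apply: mulr_ge0 => //| rewrite gerBl; exact: ltW (q0 _)]))
  (ltac:(move=> e e0; have [kk hk] := pow2_small (2 * C0 * `|y|) e0; exists kk;
         by rewrite /q mulrA)).
have Al : A l = y.
  apply/eqP; rewrite eq_sym -subr_eq0 -normr_le0.
  apply/ler_addgt0Pr => e e0; rewrite add0r.
  have [k hk] := pow2_small (`|y| * (1 + cA * (2 * C0))) e0.
  apply: (le_trans (ler_distD (A (w k)) _ _)).
  have h1 := Res k.
  have h2 : `|A (w k) - A l| <= cA * (2 * C0 * q k).
    rewrite -AB; apply: (le_trans (Abd _)); apply: ler_wpM2l => //; rewrite distrC; exact: Hl.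
  apply: ltW; apply: (le_lt_trans _ hk).
  have -> : `|y| * (1 + cA * (2 * C0)) / 2 ^+ k = q k + cA * (2 * C0 * q k).
    by rewrite /q; field; rewrite expf_neq0.
  exact: lerD.
exists (v0 - l); split; first by rewrite AB Al subrr.
rewrite opprB addrC subrK.
have := Hl 0%N; rewrite /= subr0 /q expr0 divr1 -/y => h.
apply: (le_trans h); apply: ler_wpM2r; [exact: normr_ge0 | by rewrite lerDl ler01].
Qed.

End OpenMap.

Section Gen.
Variable R : realType.

Lemma open_ballP (V : normedModType R) (O : set V) x :
  open O -> O x -> exists2 r, 0 < r & forall y, `|y - x| < r -> O y.
Proof.
move=> oO Ox.
have /nbhs_ballP [r r0 Hr] : nbhs x O by apply: open_nbhs_nbhs; split.
exists r => // y yx; apply: Hr; rewrite -ball_normE /ball_ /= distrC //.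
Qed.

Lemma closed_eps (V : normedModType R) (S : set V) :
  closed S -> forall y, (forall e, 0 < e -> exists2 z, S z & `|y - z| < e) -> S y.
Proof.
move=> cS y Hy; apply: cS => B /nbhs_ballP [e e0 He].
have [z Sz yz] := Hy e e0; exists z; split => //; apply: He.
by rewrite -ball_normE /ball_ /=.
Qed.

Lemma lin1 (V W : normedModType R) (A : seq V -> W) :
  multilinear 1 A -> forall (a : R) u v, A [:: a *: u + v] = a *: A [:: u] + A [:: v].
Proof. by move=> H a u v; have := H [::] [::] erefl a u v. Qed.

Lemma lin_facts (V W : normedModType R) (A : V -> W) :
  (forall (a : R) u v, A (a *: u + v) = a *: A u + A v) ->
  [/\ A 0 = 0, forall (a : R) u, A (a *: u) = a *: A u,
      forall u v, A (u + v) = A u + A v,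
      forall u, A (- u) = - A u & forall u v, A (u - v) = A u - A v].
Proof.
move=> Alin.
have A0 : A 0 = 0.
  have h := Alin 1 0 0; rewrite scaler0 addr0 scale1r in h.
  by apply: (addrI (A 0)); rewrite addr0 -h.
have AZ : forall a u, A (a *: u) = a *: A u.
  by move=> a u; have := Alin a u 0; rewrite !addr0 A0 addr0.
have AD : forall u v, A (u + v) = A u + A v.
  by move=> u v; have := Alin 1 u v; rewrite !scale1r.
have AN : forall u, A (- u) = - A u.
  by move=> u; rewrite -scaleN1r AZ scaleN1r.
split => // u v; by rewrite AD AN.
Qed.

Lemma bnd1 (V W : normedModType R) (A : seq V -> W) :
  bounded_multilinear 1 A -> exists2 c, 0 <= c & forall h, `|A [:: h]| <= c * `|h|.
Proof.
move=> [C HC]; exists (Num.max C 0); first by rewrite le_max lexx orbT.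
move=> h; have := HC [:: h] erefl; rewrite big_seq1 => H.
apply: (le_trans H); apply: ler_wpM2r => //; by rewrite le_max lexx.
Qed.

Lemma scale_bound (V W : normedModType R) (G : V -> W) (e : R) :
  (forall (a : R) u v, G (a *: u + v) = a *: G u + G v) ->
  (forall u, `|u| <= 1 -> `|G u| <= e) -> forall h, `|G h| <= e * `|h|.
Proof.
move=> Glin Hb h.
have [G0 GZ _ _ _] := lin_facts Glin.
have [->|hn0] := eqVneq h 0.
  by rewrite G0 !normr0 mulr0.
have nh : 0 < `|h| by rewrite normr_gt0.
set u := `|h|^-1 *: h.
have hu : h = `|h| *: u by rewrite /u scalerA divff ?gt_eqF // scale1r.
rewrite {1}hu GZ normrZ normr_id mulrC; apply: ler_wpM2r => //.
apply: Hb; rewrite /u normrZ normfV normr_id mulVf ?gt_eqF //.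
Qed.

End Gen.

Section UD.
Variable R : realType.

Lemma alg3 (W : normedModType R) (a b c la lb lc : W) :
  (a - la) - (b - lb) - (c - lc) = (a - b - c) - (la - lb - lc).
Proof. rewrite !opprD !opprK !addrA.
rewrite (addrAC a (-la) (-b)) (addrAC (a - b - la) lb (-c)) (addrAC (a - b) (-la) (-c)) //.
Qed.
Lemma alg2 (W : normedModType R) (a b la lb : W) :
  (a - la) - (b - lb) = (a - b) - (la - lb).
Proof. by rewrite !opprD !opprK !addrA (addrAC a (-la) (-b)). Qed.

Lemma seg_ball (V : normedModType R) (x0 a b : V) (rho t : R) :
  `|a - x0| < rho -> `|b - x0| < rho -> 0 <= t <= 1 -> `|a + t *: (b - a) - x0| < rho.
Proof.
move=> ha hb /andP[t0 t1].
have -> : a + t *: (b - a) - x0 = (1 - t) *: (a - x0) + t *: (b - x0).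
  have conv : forall (v w : V), (1 - t) *: v + t *: w = v + t *: (w - v).
    by move=> v w; rewrite scalerBl scale1r scalerBr addrAC addrA.
  by rewrite conv (opprB a x0) addrA subrK addrAC.
apply: (le_lt_trans (ler_normD _ _)); rewrite !normrZ !ger0_norm ?subr_ge0 //.
set m := Num.max `|a - x0| `|b - x0|.
have m1 : `|a - x0| <= m by rewrite le_max lexx.
have m2 : `|b - x0| <= m by rewrite le_max lexx orbT.
have m3 : m < rho by rewrite gt_max ha hb.
have h1 : (1 - t) * `|a - x0| <= (1 - t) * m by apply: ler_wpM2l; rewrite ?subr_ge0.
have h2 : t * `|b - x0| <= t * m by apply: ler_wpM2l.
lra.
Qed.

Lemma unif_diff (V W : normedModType R) (O : set V) (f : V -> W)
    (D : nat -> V -> seq V -> W) (x0 : V) :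
  deriv_data 1 O f D -> open O -> O x0 ->
  forall e, 0 < e -> exists2 rho, 0 < rho & (forall y, `|y - x0| < rho -> O y) /\
    forall a b, `|a - x0| < rho -> `|b - x0| < rho ->
      `|f b - f a - D 1%N x0 [:: b - a]| <= e * `|b - a|.
Proof.
move=> [D0 Dlb Ddiff Dcont] oO Ox0 e e0.
have [r r0 Hr] := open_ballP oO Ox0.
have [d1 d10 Hd1] := Dcont x0 Ox0 e e0.
set rho := Num.min r d1.
have rhor : rho <= r by rewrite ge_min lexx.
have rhod : rho <= d1 by rewrite ge_min lexx orbT.
have rho0 : 0 < rho by rewrite lt_min r0 d10.
have Hball : forall y, `|y - x0| < rho -> O y.
  by move=> y hy; apply: Hr; exact: lt_le_trans hy rhor.
exists rho => //; split => // a b ha hb.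
pose L h := D 1%N x0 [:: h].
have Llin : forall (c : R) u v, L (c *: u + v) = c *: L u + L v.
  by apply: lin1; case: (Dlb 1%N x0 (leqnn 1) Ox0).
have [L0 LZ LD LN LB] := lin_facts Llin.
have := @mvi_seg R V W (fun z => `|z - x0| < rho) (fun z => f z - L z)
  (fun z h => D 1%N z [:: h] - L h) a b e (ltW e0)
  (fun t t01 => seg_ball ha hb t01).
rewrite alg2 -LB; apply.
move=> t t01; set z := a + t *: (b - a).
have zb : `|z - x0| < rho by exact: seg_ball.
have Oz : O z by exact: Hball.
split.
  move=> e' e'0.
  have [d d0 Hd] := Ddiff 0%N z (ltac:(by [])) Oz e' e'0.
  exists (Num.min d rho); first by rewrite lt_min d0 rho0.
  move=> z' z'b z'z.
  have z'O : O z' by exact: Hball.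
  have zd : `|z' - z| < d by apply: (lt_le_trans z'z); rewrite ge_min lexx.
  have := Hd z' z'O zd [::] (ltac:(by split)).
  rewrite !D0 // alg3 LB subrr subr0 //.
move=> c.
have Glin : forall (c0 : R) u v, (fun h => D 1%N z [:: h] - L h) (c0 *: u + v)
    = c0 *: (fun h => D 1%N z [:: h] - L h) u + (fun h => D 1%N z [:: h] - L h) v.
  move=> c0 u v /=.
  have -> : D 1%N z [:: c0 *: u + v] = c0 *: D 1%N z [:: u] + D 1%N z [:: v].
    by apply: lin1; case: (Dlb 1%N z (leqnn 1) Oz).
  by rewrite Llin scalerBr opprD addrACA.
have := scale_bound Glin (e := e) _ (c *: (b - a)).
rewrite normrZ mulrA; apply.
move=> u u1 /=.
apply: (Hd1 z Oz (lt_le_trans zb rhod) [:: u]).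
by split => //=; rewrite u1.
Qed.

End UD.

Section Chain.
Variable R : realType.

Lemma chain_id (X : normedModType R) (Vs Ws : set X) (phi psi : X -> X)
    (Dphi Dpsi : nat -> X -> seq X -> X) (p : X) :
  deriv_data 1 Vs phi Dphi -> deriv_data 1 Ws psi Dpsi -> open Vs -> open Ws ->
  Vs p -> (forall x, Vs x -> Ws (phi x) /\ psi (phi x) = x) ->
  forall v, Dpsi 1%N (phi p) [:: Dphi 1%N p [:: v]] = v.
Proof.
move=> Hphi Hpsi oV oW Vp Hinv v.
have Wf0 : Ws (phi p) by case: (Hinv p Vp).
set f0 := phi p.
pose B h := Dphi 1%N p [:: h].
pose Q h := Dpsi 1%N f0 [:: h].
have Blin : forall (c : R) u w, B (c *: u + w) = c *: B u + B w.
  by apply: lin1; case: Hphi => _ H _ _; case: (H 1%N p (leqnn 1) Vp).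
have Qlin : forall (c : R) u w, Q (c *: u + w) = c *: Q u + Q w.
  by apply: lin1; case: Hpsi => _ H _ _; case: (H 1%N f0 (leqnn 1) Wf0).
have [cB cB0 HcB] : exists2 c, 0 <= c & forall h, `|B h| <= c * `|h|.
  by apply: bnd1; case: Hphi => _ H _ _; case: (H 1%N p (leqnn 1) Vp).
have [cQ cQ0 HcQ] : exists2 c, 0 <= c & forall h, `|Q h| <= c * `|h|.
  by apply: bnd1; case: Hpsi => _ H _ _; case: (H 1%N f0 (leqnn 1) Wf0).
have [_ BZ _ _ BB] := lin_facts Blin.
have [_ QZ _ _ QB] := lin_facts Qlin.
apply/eqP; rewrite -subr_eq0 -normr_le0; apply/ler_addgt0Pr => e e0; rewrite add0r.
set K := (cQ + cB + 1) * (`|v| + 1).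
have K0 : 0 < K by rewrite /K mulr_gt0 // ltr_wpDl // ?addr_ge0 // ltr_wpDl.
set eta := Num.min 1 (e / K).
have eta0 : 0 < eta by rewrite lt_min ltr01 divr_gt0.
have eta1 : eta <= 1 by rewrite ge_min lexx.
have etaK : eta * K <= e by rewrite -ler_pdivlMr // ge_min lexx orbT.
have [r1 r10 [Hb1 H1]] := unif_diff Hphi oV Vp eta0.
have [r2 r20 [_ H2]] := unif_diff Hpsi oW Wf0 eta0.
set m := Num.min r1 r2.
have m0 : 0 < m by rewrite lt_min r10 r20.
set s := m / (2 * (cB + 2) * (`|v| + 1)).
have den0 : 0 < 2 * (cB + 2) * (`|v| + 1).
  by rewrite !mulr_gt0 // ltr_wpDl // ltr_wpDl.
have s0 : 0 < s by rewrite divr_gt0.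
have sv : s * `|v| * ((cB + 2) * 2) <= m.
  rewrite /s; have -> : m / (2 * (cB + 2) * (`|v| + 1)) * `|v| * ((cB + 2) * 2)
     = m * (`|v| / (`|v| + 1)) by field; rewrite ?gt_eqF // ltr_wpDl // ltr_wpDl.
  rewrite -[X in _ <= X]mulr1; apply: ler_wpM2l; first exact: ltW.
  by rewrite ler_pdivrMr ?ltr_wpDl // mul1r lerDl.
have mr1 : m <= r1 by rewrite ge_min lexx.
have mr2 : m <= r2 by rewrite ge_min lexx orbT.
set x := p + s *: v.
have xp : x - p = s *: v by rewrite /x addrC addKr.
have nxp : `|x - p| = s * `|v| by rewrite xp normrZ gtr0_norm.
have w0 : 0 <= s * `|v| by rewrite mulr_ge0 // ltW.
have wc : 0 <= s * `|v| * cB by rewrite mulr_ge0.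
have xr1 : `|x - p| < r1 by rewrite nxp; lra.
have E1 : `|phi x - f0 - s *: B v| <= eta * (s * `|v|).
  rewrite -BZ -nxp -xp; apply: H1 => //; by rewrite subrr normr0.
set h := phi x - f0.
have nh : `|h| <= s * `|v| * (cB + 1).
  have : `|h| <= `|h - s *: B v| + `|s *: B v|.
    by rewrite -{1}(subrK (s *: B v) h) ler_normD.
  have : `|s *: B v| <= s * (cB * `|v|).
    by rewrite normrZ gtr0_norm //; apply: ler_wpM2l; [exact: ltW|].
  have : eta * (s * `|v|) <= s * `|v| by rewrite -[X in _ <= X]mul1r; apply: ler_wpM2r.
  lra.
have hr2 : `|h| < r2 by lra.
have Vx : Vs x by apply: Hb1.
have E2 : `|x - p - Q h| <= eta * `|h|.
  have [_ <-] := Hinv x Vx; have [_ <-] := Hinv p Vp.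
  apply: H2 => //; by rewrite subrr normr0.
rewrite xp in E2.
have key : s * `|Q (B v) - v| <= s * e.
  have -> : s * `|Q (B v) - v| = `|s *: (Q (B v) - v)| by rewrite normrZ gtr0_norm.
  have -> : s *: (Q (B v) - v) = Q (s *: B v - h) + (Q h - s *: v).
    by rewrite QB QZ addrA subrK scalerBr.
  apply: (le_trans (ler_normD _ _)).
  have : `|Q (s *: B v - h)| <= cQ * (eta * (s * `|v|)).
    apply: (le_trans (HcQ _)); apply: ler_wpM2l => //; by rewrite distrC.
  have : `|Q h - s *: v| <= eta * (s * `|v| * (cB + 1)).
    rewrite distrC; apply: (le_trans E2); apply: ler_wpM2l => //; exact: ltW.
  have : s * (eta * K) <= s * e by apply: ler_wpM2l => //; exact: ltW.
  have : eta * (s * `|v|) * (cQ + cB + 1) <= s * (eta * K).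
    rewrite /K; have -> : s * (eta * ((cQ + cB + 1) * (`|v| + 1))) =
       eta * (s * (`|v| + 1)) * (cQ + cB + 1) by ring.
    apply: ler_wpM2r; first by rewrite !addr_ge0.
    apply: ler_wpM2l; first exact: ltW.
    apply: ler_wpM2l; first exact: ltW.
    by rewrite lerDl.
  set a1 := `|Q _|; set a2 := `|Q h - _|.
  move=> h1 h2 h3 h4.
  have : cQ * (eta * (s * `|v|)) + eta * (s * `|v| * (cB + 1)) =
     eta * (s * `|v|) * (cQ + cB + 1) by ring.
  lra.
by rewrite ler_pM2l in key.
Qed.
End Chain.

Section Hess.
Variable R : realType.

Lemma lin_R (V : normedModType R) (f : V -> R) :
  (forall (a : R) u v, f (a *: u + v) = a * f u + f v) ->
  (forall (a : R) u v, f (a *: u + v) = a *: f u + f v).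
Proof. by []. Qed.

Lemma hess_id (X Y : normedModType R) (j : Y -> X -> R) (U : set X) (E : X -> R)
    (DE : nat -> X -> seq X -> R) (M : X -> Y) (DM : nat -> X -> seq X -> Y) (p : X) :
  continuous_embedding_dual j -> open U -> U p ->
  deriv_data 2 U E DE -> deriv_data 1 U M DM ->
  (forall x, U x -> forall v, DE 1%N x [:: v] = j (M x) v) ->
  forall v w, DE 2%N p [:: v; w] = j (DM 1%N p [:: v]) w.
Proof.
move=> [j1 j2 [Cj HCj] _] oU Up [E0 Elb Ediff _] [M0 Mlb Mdiff _] Hgr v.
have Hml2 : multilinear 2 (DE 2%N p) by case: (Elb 2%N p isT Up).
pose A h := DM 1%N p [:: h].
have Alin : forall (c : R) u w, A (c *: u + w) = c *: A u + A w.
  by apply: lin1; case: (Mlb 1%N p (leqnn 1) Up).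
have [_ AZ _ _ _] := lin_facts Alin.
pose G w := DE 2%N p [:: v; w] - j (A v) w.
have Glin : forall (a : R) u u', G (a *: u + u') = a *: G u + G u'.
  move=> a u u'; rewrite /G.
  have -> : DE 2%N p [:: v; a *: u + u'] = a * DE 2%N p [:: v; u] + DE 2%N p [:: v; u'].
    exact: (Hml2 [:: v] [::] erefl a u u').
  rewrite j2 /GRing.scale /=; ring.
suff Hu : forall w, `|w| <= 1 -> G w = 0.
  move=> w; apply/eqP; rewrite -subr_eq0 -normr_le0.
  have := scale_bound Glin (e := 0) _ w; rewrite mul0r; apply.
  by move=> u u1; rewrite Hu // normr0.
move=> w w1.
pose Cj' := Num.max Cj 0.
have Cj'0 : 0 <= Cj' by rewrite le_max lexx orbT.
have HCj' : forall y x, `|j y x| <= Cj' * `|y| * `|x|.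
  move=> y x; apply: (le_trans (HCj y x)); rewrite -!mulrA; apply: ler_wpM2r.
    by rewrite mulr_ge0.
  by rewrite le_max lexx.
have jlin : forall x, forall (a : R) y y', (fun y => j y x) (a *: y + y') = a *: (fun y => j y x) y + (fun y => j y x) y'.
  by move=> x; apply: lin_R => a y y'; apply: j1.
apply/eqP; rewrite -normr_le0; apply/ler_addgt0Pr => e e0; rewrite add0r.
set K := (1 + Cj') * (`|v| + 1).
have nv := normr_ge0 v.
have K0 : 0 < K by rewrite /K; apply: mulr_gt0; lra.
set eta := e / K.
have eta0 : 0 < eta by rewrite divr_gt0.
have [d1 d10 H1] := Ediff 1%N p isT Up eta eta0.
have [d2 d20 H2] := Mdiff 0%N p isT Up eta eta0.
have [r r0 Hr] := open_ballP oU Up.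
set m := Num.min r (Num.min d1 d2).
have m0 : 0 < m by rewrite !lt_min r0 d10 d20.
have mr : m <= r by rewrite ge_min lexx.
have md1 : m <= d1 by rewrite !ge_min lexx orbT.
have md2 : m <= d2 by rewrite !ge_min lexx !orbT.
set s := m / (2 * (`|v| + 1)).
have s0 : 0 < s by rewrite divr_gt0 //; apply: mulr_gt0; lra.
have svm : s * `|v| < m.
  rewrite /s; have -> : m / (2 * (`|v| + 1)) * `|v| = m * (`|v| / (2 * (`|v| + 1))).
    by rewrite mulrAC -mulrA.
  rewrite -[X in _ < X]mulr1 ltr_pM2l // ltr_pdivrMr ?mul1r; first lra.
  apply: mulr_gt0; lra.
set y := p + s *: v.
have yp : y - p = s *: v by rewrite /y addrC addKr.
have nyp : `|y - p| = s * `|v| by rewrite yp normrZ gtr0_norm.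
have Uy : U y by apply: Hr; rewrite nyp; lra.
have T1 := H1 y Uy (ltac:(rewrite nyp; lra)) [:: w] (ltac:(by split => //=; rewrite w1)).
have T2 := H2 y Uy (ltac:(rewrite nyp; lra)) [::] (ltac:(by split)).
rewrite !M0 // yp in T2; rewrite !Hgr // yp in T1.
have [_ G1Z _ _ _] := lin_facts (A := fun u => DE 2%N p [:: u; w]) (Hml2 [::] [:: w] erefl).
rewrite G1Z /= normrZ gtr0_norm // in T1.
have {T2} T2 : `|M y - M p - s *: A v| <= eta * (s * `|v|).
  by move: T2; rewrite -AZ normrZ gtr0_norm // => h; exact: h.
have [_ JZ _ _ JB] := lin_facts (jlin w).
have T3 : `|j (M y - M p - s *: A v) w| <= Cj' * (eta * (s * `|v|)).
  apply: (le_trans (HCj' _ _)); rewrite -mulrA; apply: ler_wpM2l => //.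
  rewrite -[X in _ <= X]mulr1; apply: ler_pM => //.
rewrite /= !JB /= JZ /= in T3.
have key : s * `|G w| <= s * e.
  have -> : s * `|G w| = `|s * G w| by rewrite normrM gtr0_norm.
  have -> : s * G w = (j (M y) w - j (M p) w - s *: j (A v) w) -
     (j (M y) w - j (M p) w - s *: DE 2%N p [:: v; w]).
    by rewrite /G /GRing.scale /=; ring.
  apply: (le_trans (ler_normB _ _)).
  have : eta * (s * `|v|) * (1 + Cj') <= s * e.
    rewrite /eta /K; have -> : e / ((1 + Cj') * (`|v| + 1)) * (s * `|v|) * (1 + Cj') =
      s * (e * (`|v| / (`|v| + 1))).
      by field; apply/andP; split; lra.
    apply: ler_wpM2l; first exact: ltW.
    rewrite -[X in _ <= X]mulr1; apply: ler_wpM2l; first exact: ltW.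
    by rewrite ler_pdivrMr ?mul1r; lra.
  move: T1 T3; set a1 := `|_ - _ - _|; set a2 := `|_ - _ - _|.
  move=> T1 T3 h; have : Cj' * (eta * (s * `|v|)) + eta * (s * `|v|) = eta * (s * `|v|) * (1 + Cj') by ring.
  lra.
by rewrite ler_pM2l in key.
Qed.

End Hess.

Section Taylor.
Variable R : realType.

Lemma taylorE (X Y : normedModType R) (j : Y -> X -> R) (U : set X) (E : X -> R)
    (DE : nat -> X -> seq X -> R) (M : X -> Y) (p : X) (rho L Cj : R) :
  0 <= L -> 0 <= Cj -> (forall y x, `|j y x| <= Cj * `|y| * `|x|) ->
  deriv_data 2 U E DE ->
  (forall x, U x -> forall v, DE 1%N x [:: v] = j (M x) v) ->
  (forall y, `|y - p| < rho -> U y) ->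
  (forall a b, `|a - p| < rho -> `|b - p| < rho -> `|M b - M a| <= L * `|b - a|) ->
  forall x s, `|x - p| < rho -> `|s - p| < rho -> M s = 0 ->
    `|E x - E s| <= Cj * L * `|x - s| ^+ 2.
Proof.
move=> L0 Cj0 HCj [E0 _ Ediff _] Hgr Hball HL x s xp sp Ms0.
rewrite expr2 mulrA.
apply: (@mvi_seg R X R (fun z => `|z - p| < rho) E (fun z h => DE 1%N z [:: h]) s x).
- by apply: mulr_ge0 => //; apply: mulr_ge0.
- by move=> t t01; apply: seg_ball.
move=> t t01; set z := s + t *: (x - s).
have zb : `|z - p| < rho by apply: seg_ball.
have Uz : U z by apply: Hball.
split.
  move=> e e0.
  have [d d0 Hd] := Ediff 0%N z isT Uz e e0.
  exists d => // z' z'b z'z.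
  have := Hd z' (Hball _ z'b) z'z [::] (ltac:(by split)).
  by rewrite !E0 //; apply: Hball.
move=> a.
rewrite Hgr //.
apply: (le_trans (HCj _ _)).
have hz : `|M z| <= L * `|x - s|.
  rewrite -(subr0 (M z)) -Ms0; apply: (le_trans (HL _ _ sp zb)); apply: ler_wpM2l => //.
  rewrite /z addrC addKr normrZ; case/andP: t01 => t0 t1.
  rewrite ger0_norm //; rewrite -[X in _ <= X]mul1r; apply: ler_wpM2r => //.
rewrite normrZ.
have h1 : Cj * `|M z| <= Cj * (L * `|x - s|) by apply: ler_wpM2l.
have -> : Cj * L * `|x - s| * `|a| * `|x - s| = Cj * (L * `|x - s|) * (`|a| * `|x - s|) by ring.
apply: ler_wpM2r => //; apply: mulr_ge0 => //.
Qed.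

End Taylor.

Section Main.
Variable R : realType.
Variables (X Y : completeNormedModType R) (j : Y -> X -> R) (U : set X) (E : X -> R)
  (DE : nat -> X -> seq X -> R) (M : X -> Y) (DM : nat -> X -> seq X -> Y) (p : X).
Hypothesis Hj : continuous_embedding_dual j.
Hypothesis oU : open U.
Hypothesis Up : U p.
Hypothesis HE : deriv_data 2 U E DE.
Hypothesis Hcrit : forall v, DE 1%N p [:: v] = 0.
Hypothesis HM : deriv_data 1 U M DM.
Hypothesis Hgrad : gradient_map j U DE M.
Hypothesis Hran : closed (range (fun v : X => DM 1%N p [:: v])).
Variables (Vs Ws : set X) (phi psi : X -> X) (Dphi : nat -> X -> seq X -> X) (F : set X).
Hypothesis Hchart : submanifold_chart (crit_set U DE) p Vs Ws phi psi Dphi F.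
Hypothesis HT : hessian_kernel DE p = [set v | F (Dphi 1%N p [:: v])].

Local Notation S := (crit_set U DE).

Lemma Mzero s : S s -> M s = 0.
Proof.
move=> [Us Hs]; case: Hj => _ _ _ Hinj; apply: Hinj => x.
by case: Hgrad => _ H; rewrite -H.
Qed.

Lemma S_p : S p.
Proof. by split. Qed.

Lemma psi_S g : Ws g -> F g -> S (psi g).
Proof.
move=> Wg Fg.
have [_ [Hinv1 _ _ Himg]] := Hchart.
have : (phi @` (S `&` Vs)) g by rewrite Himg.
by case=> s [Ss Vss] <-; have [_ ->] := Hinv1 s Vss.
Qed.

Lemma phi_F s : S s -> Vs s -> F (phi s).
Proof.
move=> Ss Vss; have [_ [_ _ _ Himg]] := Hchart.
have : (Ws `&` F) (phi s) by rewrite -Himg; exists s.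
by case.
Qed.


Lemma ker_F k : DM 1%N p [:: k] = 0 -> F (Dphi 1%N p [:: k]).
Proof.
move=> Ak.
have : hessian_kernel DE p k.
  move=> w; rewrite (hess_id Hj oU Up HE HM Hgrad.2) Ak.
  case: Hj => j1 _ _ _.
  have [J0 _ _ _ _] := lin_facts (A := fun y => j y w) (lin_R (fun a y y' => j1 a y y' w)).
  exact: J0.
by rewrite HT.
Qed.

Lemma move_lemma : exists2 rho1, 0 < rho1 & forall s k, S s -> `|s - p| < rho1 ->
  DM 1%N p [:: k] = 0 -> `|k| < rho1 -> exists s', S s' /\ `|s' - s - k| <= `|k| / 8.
Proof.
have [[oV Vp oW Hphi [Dpsi Hpsi]] [Hinv1 Hinv2 [[F0 Flin] _] _]] := Hchart.
have Hphi1 := Hphi 1%N; have Hpsi1 := Hpsi 1%N.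
have [Wf0 psif0] := Hinv1 p Vp.
have chain := chain_id Hphi1 Hpsi1 oV oW Vp Hinv1.
set f0 := phi p in Wf0 psif0 chain.
pose B h := Dphi 1%N p [:: h].
have [cB cB0 HcB] : exists2 c, 0 <= c & forall h, `|B h| <= c * `|h|.
  by apply: bnd1; case: Hphi1 => _ H _ _; case: (H 1%N p (leqnn 1) Vp).
have Blin : forall (c : R) u w, B (c *: u + w) = c *: B u + B w.
  by apply: lin1; case: Hphi1 => _ H _ _; case: (H 1%N p (leqnn 1) Vp).
have [_ _ _ _ BB] := lin_facts Blin.
set eps := 1 / (8 * (cB + 1)).
have eps0 : 0 < eps by rewrite /eps divr_gt0 // mulr_gt0 // ltr_wpDl.
have [rpsi rpsi0 [Bpsi Upsi]] := unif_diff Hpsi1 oW Wf0 eps0.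
have [rphi rphi0 [Bphi Uphi]] := unif_diff Hphi1 oV Vp (ltr01 : (0:R) < 1).
have cB1 : 0 < cB + 1 by rewrite ltr_wpDl.
set rho1 := Num.min rphi (rpsi / (2 * (cB + 1))).
have r1a : rho1 <= rphi by rewrite ge_min lexx.
have r1b : rho1 <= rpsi / (2 * (cB + 1)) by rewrite ge_min lexx orbT.
exists rho1; first by rewrite lt_min rphi0 divr_gt0 // mulr_gt0.
move=> s k Ss sp Ak kp.
have Vss : Vs s by apply: Bphi; exact: lt_le_trans sp r1a.
have h1 := Uphi p s (ltac:(by rewrite subrr normr0)) (lt_le_trans sp r1a).
have nphi : `|phi s - f0| <= (cB + 1) * `|s - p|.
  have : `|phi s - f0| <= `|phi s - f0 - B (s - p)| + `|B (s - p)|.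
    by rewrite -{1}(subrK (B (s - p)) (phi s - f0)) ler_normD.
  have := HcB (s - p); move: h1; rewrite mul1r -/f0.
  set a := `|_ - _ - _|; set b := `|B _|; move=> h1 h2 h3; lra.
have q1 : (cB + 1) * `|s - p| < rpsi / 2.
  have : `|s - p| < rpsi / (2 * (cB + 1)) by exact: lt_le_trans sp r1b.
  rewrite ltr_pdivlMr ?mulr_gt0 // => h.
  by rewrite ltr_pdivlMr //; lra.
have q2 : `|B k| < rpsi / 2.
  have : `|k| < rpsi / (2 * (cB + 1)) by exact: lt_le_trans kp r1b.
  rewrite ltr_pdivlMr ?mulr_gt0 // => h.
  apply: (le_lt_trans (HcB k)); rewrite ltr_pdivlMr //.
  have : 0 <= `|k| by [].
  nra.
set g := phi s + B k.
have Fg : F g by rewrite /g -[phi s]scale1r; apply: Flin; [exact: phi_F | exact: ker_F].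
have gf0 : `|g - f0| < rpsi.
  have : `|g - f0| <= `|phi s - f0| + `|B k|.
    by rewrite /g addrAC; apply: ler_normD.
  lra.
have Wg : Ws g by apply: Bpsi.
exists (psi g); split; first exact: psi_S.
have phisr : `|phi s - f0| < rpsi by lra.
have := Upsi (phi s) g phisr gf0.
have [_ ->] := Hinv1 s Vss.
have -> : g - phi s = B k by rewrite /g addrC addKr.
rewrite chain => h.
apply: (le_trans h).
apply: (le_trans (ler_wpM2l (ltW eps0) (HcB k))).
have -> : 1 / (8 * (cB + 1)) * (cB * `|k|) = (cB / (cB + 1)) * (`|k| / 8).
  by field; rewrite gt_eqF.
rewrite -[X in _ <= X]mul1r; apply: ler_wpM2r; first by apply: divr_ge0.
by rewrite ler_pdivrMr // mul1r lerDl.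
Qed.


Lemma Cj_pos : exists2 Cj, 0 <= Cj & forall y x, `|j y x| <= Cj * `|y| * `|x|.
Proof.
case: Hj => _ _ [Cj HCj] _; exists (Num.max Cj 0); first by rewrite le_max lexx orbT.
move=> y x; apply: (le_trans (HCj y x)); rewrite -!mulrA; apply: ler_wpM2r.
  by rewrite mulr_ge0.
by rewrite le_max lexx.
Qed.

Lemma A_facts : [/\ forall (c : R) u w, DM 1%N p [:: c *: u + w] = c *: DM 1%N p [:: u] + DM 1%N p [:: w]
  & exists2 cA, 0 <= cA & forall h, `|DM 1%N p [:: h]| <= cA * `|h|].
Proof.
case: HM => _ H _ _; case: (H 1%N p (leqnn 1) Up) => h1 h2; split.
  exact: lin1.
exact: bnd1.
Qed.

Lemma lip_from_ud (V W : normedModType R) (f : V -> W) (L0 : V -> W) (x0 : V) (rho cL e : R) :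
  (forall h, `|L0 h| <= cL * `|h|) ->
  (forall a b, `|a - x0| < rho -> `|b - x0| < rho -> `|f b - f a - L0 (b - a)| <= e * `|b - a|) ->
  forall a b, `|a - x0| < rho -> `|b - x0| < rho -> `|f b - f a| <= (cL + e) * `|b - a|.
Proof.
move=> HL Hu a b ha hb.
have := Hu a b ha hb; have := HL (b - a).
have : `|f b - f a| <= `|f b - f a - L0 (b - a)| + `|L0 (b - a)|.
  by rewrite -{1}(subrK (L0 (b - a)) (f b - f a)) ler_normD.
set u := `|_ - _ - _|; set w := `|L0 _|; move=> h1 h2 h3.
have : (cL + e) * `|b - a| = cL * `|b - a| + e * `|b - a| by ring.
lra.
Qed.

Lemma const_lemma : exists2 rho2, 0 < rho2 & forall s, S s -> `|s - p| < rho2 -> E s = E p.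
Proof.
have [[oV Vp oW Hphi [Dpsi Hpsi]] [Hinv1 Hinv2 [[F0 Flin] _] _]] := Hchart.
have Hphi1 := Hphi 1%N; have Hpsi1 := Hpsi 1%N.
have [Wf0 psif0] := Hinv1 p Vp.
set f0 := phi p in Wf0 psif0.
have [Alin [cA cA0 HcA]] := A_facts.
have [rM rM0 [BM UM]] := unif_diff HM oU Up (ltr01 : (0:R) < 1).
have LipM := lip_from_ud HcA UM.
have [Cj Cj0 HCj] := Cj_pos.
have L0 : 0 <= cA + 1 by rewrite addr_ge0.
have Tay := taylorE L0 Cj0 HCj HE Hgrad.2 BM LipM.
set CT := Cj * (cA + 1) in Tay.
have CT0 : 0 <= CT by rewrite mulr_ge0.
have [cQ cQ0 HcQ] : exists2 c, 0 <= c & forall h, `|Dpsi 1%N f0 [:: h]| <= c * `|h|.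
  by apply: bnd1; case: Hpsi1 => _ H _ _; case: (H 1%N f0 (leqnn 1) Wf0).
have [cB cB0 HcB] : exists2 c, 0 <= c & forall h, `|Dphi 1%N p [:: h]| <= c * `|h|.
  by apply: bnd1; case: Hphi1 => _ H _ _; case: (H 1%N p (leqnn 1) Vp).
have [rpsi rpsi0 [Bpsi Upsi]] := unif_diff Hpsi1 oW Wf0 (ltr01 : (0:R) < 1).
have [rphi rphi0 [Bphi Uphi]] := unif_diff Hphi1 oV Vp (ltr01 : (0:R) < 1).
have LipPsi := lip_from_ud HcQ Upsi.
have LipPhi := lip_from_ud HcB Uphi.
set Lq := cQ + 1 in LipPsi; set Lb := cB + 1 in LipPhi.
have Lq0 : 0 < Lq by rewrite /Lq ltr_wpDl.
have Lb0 : 0 < Lb by rewrite /Lb ltr_wpDl.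
set rp := Num.min rpsi (rM / (Lq + 1)).
have rp0 : 0 < rp by rewrite lt_min rpsi0 divr_gt0 // ltr_wpDl // ltW.
have rprpsi : rp <= rpsi by rewrite ge_min lexx.
have rpM : Lq * rp < rM.
  have h : rp <= rM / (Lq + 1) by rewrite ge_min lexx orbT.
  have Lq10 : 0 < Lq + 1 by lra.
  have h' : rp * (Lq + 1) <= rM by move: h; rewrite ler_pdivlMr.
  lra.
exists (Num.min rphi (rp / Lb)); first by rewrite lt_min rphi0 divr_gt0.
move=> s Ss sp.
have sp1 : `|s - p| < rphi by apply: (lt_le_trans sp); rewrite ge_min lexx.
have sp2 : `|s - p| < rp / Lb by apply: (lt_le_trans sp); rewrite ge_min lexx orbT.
have Vss : Vs s by apply: Bphi.
set D := `|phi s - f0|.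
have DL : D <= Lb * `|s - p|.
  by have := LipPhi p s (ltac:(by rewrite subrr normr0)) sp1.
have Drp : D < rp by move: sp2; rewrite ltr_pdivlMr // => h; lra.
have D0 : 0 <= D by rewrite /D normr_ge0.
apply/eqP; rewrite -subr_eq0 -normr_le0; apply/ler_addgt0Pr => e e0; rewrite add0r.
set K := CT * (Lq * D) ^+ 2.
have K0 : 0 <= K by rewrite /K mulr_ge0 // sqr_ge0.
have [n hn] := nat_inv_lt (divr_gt0 e0 (ltr_wpDl K0 (ltr01 : (0:R) < 1))).
set N := n.+1.
have N0 : (0 : R) < N%:R by [].
pose g (i : nat) := f0 + (i%:R / N%:R) *: (phi s - f0).
have gdist : forall i, `|g i - f0| = i%:R / N%:R * D.
  by move=> i; rewrite /g addrC addKr normrZ ger0_norm // divr_ge0.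
have gball : forall i, (i <= N)%N -> `|g i - f0| < rp.
  move=> i iN; rewrite gdist.
  have : i%:R / N%:R <= (1 : R) by rewrite ler_pdivrMr // mul1r ler_nat.
  have : 0 <= i%:R / N%:R :> R by rewrite divr_ge0.
  nra.
have gW : forall i, (i <= N)%N -> Ws (g i).
  by move=> i iN; apply: Bpsi; exact: lt_le_trans (gball i iN) rprpsi.
have gF : forall i, F (g i).
  move=> i; have -> : g i = (i%:R / N%:R) *: phi s + ((- (i%:R / N%:R)) *: f0 + f0).
    by rewrite /g scalerBr scaleNr [LHS]addrCA [f0 - _]addrC.
  apply: (Flin); first exact: phi_F.
  by apply: (Flin); apply: phi_F => //; exact: S_p.
have gS : forall i, (i <= N)%N -> S (psi (g i)) by move=> i iN; apply: psi_S; [exact: gW|exact: gF].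
have gp : forall i, (i <= N)%N -> `|psi (g i) - p| < rM.
  move=> i iN; rewrite -psif0.
  apply: (le_lt_trans (LipPsi f0 (g i) (ltac:(by rewrite subrr normr0; exact: lt_le_trans rp0 rprpsi))
     (lt_le_trans (gball i iN) rprpsi))).
  have := gball i iN; nra.
have gstep : forall i, `|g i.+1 - g i| = D / N%:R.
  move=> i; rewrite /g opprD addrACA subrr add0r -scalerBl normrZ.
  rewrite -mulrBl -natr1 addrAC subrr add0r mul1r ger0_norm ?invr_ge0 //.
  by rewrite mulrC.
have Estep : forall i, (i < N)%N -> `|E (psi (g i.+1)) - E (psi (g i))| <= K / (N%:R ^+ 2).
  move=> i iN.
  have := Tay _ _ (gp i.+1 iN) (gp i (ltnW iN)) (Mzero (gS i (ltnW iN))).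
  move=> h; apply: (le_trans h).
  have : `|psi (g i.+1) - psi (g i)| <= Lq * (D / N%:R).
    rewrite -(gstep i); apply: LipPsi; apply: (lt_le_trans _ rprpsi);
      [exact: gball (ltnW iN) | exact: gball].
  move=> h2; rewrite /K.
  have -> : CT * (Lq * D) ^+ 2 / N%:R ^+ 2 = CT * (Lq * (D / N%:R)) ^+ 2.
    by field; rewrite gt_eqF.
  apply: ler_wpM2l => //; rewrite !expr2; apply: ler_pM => //.
have Ind : forall i, (i <= N)%N -> `|E (psi (g i)) - E p| <= i%:R * (K / N%:R ^+ 2).
  elim => [|i IH] iN.
    by rewrite /g mul0r scale0r addr0 psif0 subrr normr0 mul0r.
  apply: (le_trans (ler_distD (E (psi (g i))) _ _)).
  rewrite -natr1 mulrDl mul1r [X in _ <= X]addrC; apply: lerD; first exact: Estep.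
  exact: IH (ltnW iN).
have := Ind N (leqnn N).
have -> : g N = phi s by rewrite /g divff ?gt_eqF // scale1r addrC subrK.
have [_ ->] := Hinv1 s Vss.
move=> h; apply: (le_trans h).
have -> : N%:R * (K / N%:R ^+ 2) = K / N%:R by field; rewrite gt_eqF.
have K10 : 0 < K + 1 by lra.
move: hn; rewrite ltr_pdivlMr // mulrC => hn.
have : K / N%:R <= (K + 1) / N%:R by apply: ler_wpM2r; rewrite ?invr_ge0 // lerDl.
move: hn; rewrite /N => hn h2; apply: ltW; exact: le_lt_trans h2 hn.
Qed.


Lemma main_ineq : exists (Z sigma : R), [/\ 0 < Z, 0 < sigma, sigma <= 1 &
    forall x, U x -> `|x - p| < sigma -> Z * Num.sqrt `|E x - E p| <= `|M x| ].
Proof.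
have [Alin [cA cA0 HcA]] := A_facts.
have [CA CA0 HCA] := open_map (A := fun h => DM 1%N p [:: h]) cA0 Alin HcA (closed_eps Hran).
have [_ _ _ _ AB] := lin_facts Alin.
set c := 1 / (4 * CA).
have c0 : 0 < c by rewrite /c divr_gt0 // mulr_gt0.
have cCA : CA * c = 1 / 4 by rewrite /c; field; rewrite gt_eqF.
have c20 : 0 < c / 2 by rewrite divr_gt0.
have [rM rM0 [BM UM]] := unif_diff HM oU Up c20.
have LipM := lip_from_ud HcA UM.
have [Cj Cj0 HCj] := Cj_pos.
have L0 : 0 <= cA + c / 2 by rewrite addr_ge0 // ltW.
have Tay := taylorE L0 Cj0 HCj HE Hgrad.2 BM LipM.
set CT := Cj * (cA + c / 2) in Tay.
have CT0 : 0 <= CT by rewrite mulr_ge0.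
have [rho1 r10 Hmove] := move_lemma.
have [rho2 r20 Hconst] := const_lemma.
set R0 := Num.min rM (Num.min rho1 rho2).
have R00 : 0 < R0 by rewrite !lt_min rM0 r10 r20.
have R0M : R0 <= rM by rewrite ge_min lexx.
have R01 : R0 <= rho1 by rewrite !ge_min lexx orbT.
have R02 : R0 <= rho2 by rewrite !ge_min lexx !orbT.
set r := R0 / 2.
set sigma := Num.min 1 (r / 8).
have sig0 : 0 < sigma by rewrite lt_min ltr01 !divr_gt0.
have sig1 : sigma <= 1 by rewrite ge_min lexx.
have sigr : sigma <= r / 8 by rewrite ge_min lexx orbT.
have rR0 : r = R0 / 2 by [].
have Sq0 : 0 <= Num.sqrt CT by apply: sqrtr_ge0.
exists (c / (2 * (Num.sqrt CT + 1))), sigma; split => //.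
  by rewrite divr_gt0 // mulr_gt0 // ltr_wpDl.
move=> x Ux xp.
pose Sr := [set t : R | exists s, [/\ S s, `|s - p| < r & t = `|x - s|]].
have Srp : Sr `|x - p|.
  exists p; split; [exact S_p | | by []].
  by rewrite subrr normr0 /r divr_gt0.
have hinf : has_inf Sr.
  split; first by exists `|x - p|; exact Srp.
  by exists 0 => t [s [_ _ ->]]; exact: normr_ge0.
set d := inf Sr.
have d0 : 0 <= d by apply: lb_le_inf; [exists `|x - p|; exact Srp | move=> t [s [_ _ ->]]; exact: normr_ge0].
have dxp : d <= `|x - p| by apply: ge_inf => //; case: hinf.
have dle : forall s, S s -> `|s - p| < r -> d <= `|x - s|.
  by move=> s Ss sp; apply: ge_inf; [case: hinf | exists s].
have xrM : `|x - p| < rM by lra.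
have Ebound : `|E x - E p| <= CT * d ^+ 2.
  apply/ler_addgt0Pr => e e0.
  set eps := Num.min 1 (e / (CT * (2 * d + 1) + 1)).
  have K0 : 0 < CT * (2 * d + 1) + 1 by apply: ltr_wpDl => //; apply: mulr_ge0 => //; lra.
  have eps0 : 0 < eps by rewrite lt_min ltr01 divr_gt0.
  have eps1 : eps <= 1 by rewrite ge_min lexx.
  have epsK : eps * (CT * (2 * d + 1) + 1) <= e.
    by rewrite -ler_pdivlMr // ge_min lexx orbT.
  have [t [s [Ss sp ->]] ht] := inf_adherent eps0 hinf.
  have sp' : `|s - p| < rM by lra.
  rewrite -(Hconst s Ss (ltac:(lra))).
  apply: (le_trans (Tay x s xrM sp' (Mzero Ss))).
  have h1 : `|x - s| ^+ 2 <= (d + eps) ^+ 2.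
    by rewrite !expr2; apply: ler_pM => //; apply: ltW.
  have h2 : CT * `|x - s| ^+ 2 <= CT * (d + eps) ^+ 2 by apply: ler_wpM2l.
  have h3 : CT * (d + eps) ^+ 2 = CT * d ^+ 2 + eps * (CT * (2 * d + eps)) by ring.
  have h4 : eps * (CT * (2 * d + eps)) <= eps * (CT * (2 * d + 1)).
    by apply: ler_wpM2l; [exact: ltW | apply: ler_wpM2l => //; lra].
  have h5 : eps * (CT * (2 * d + 1)) <= e.
    by move: epsK; rewrite mulrDr mulr1; move=> h; lra.
  lra.
have Mbound : c / 2 * d <= `|M x|.
  have [dz|dpos] := eqVneq d 0; first by rewrite dz mulr0.
  have dp : 0 < d by rewrite lt_neqAle eq_sym dpos d0.
  have [t [s [Ss sp ->]] ht] := inf_adherent dp hinf.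
  set v := x - s.
  have nv : `|v| < 2 * d by rewrite /v; lra.
  have dv : d <= `|v| by exact: dle.
  have sp3 : `|s - p| < 3 * sigma.
    have : `|s - p| <= `|s - x| + `|x - p| by apply: ler_distD.
    rewrite (distrC s x) -/v; lra.
  have key : c * `|v| <= `|DM 1%N p [:: v]|.
    rewrite leNgt; apply/negP => hlt.
    have [k [Ak hk]] := HCA v.
    have hk' : `|v - k| <= `|v| / 4.
      apply: (le_trans hk); have : CA * `|DM 1%N p [:: v]| <= CA * (c * `|v|).
        by apply: ler_wpM2l; [exact: ltW | exact: ltW].
      by rewrite mulrA cCA; lra.
    have nk : `|k| <= 5 / 4 * `|v|.
      have : `|k| <= `|v| + `|v - k|.
        by rewrite {1}(_ : k = v - (v - k)) ?ler_normB // opprB addrC subrK.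
      lra.
    have kr : `|k| < rho1 by lra.
    have [s' [Ss' hs']] := Hmove s k Ss (ltac:(lra)) Ak kr.
    have s'p : `|s' - p| < r.
      have : `|s' - p| <= `|s' - s - k| + `|k| + `|s - p|.
        have -> : s' - p = (s' - s - k) + k + (s - p).
          by rewrite subrK addrA subrK.
        by apply: (le_trans (ler_normD _ _)); rewrite lerD2r ler_normD.
      lra.
    have := dle s' Ss' s'p.
    have : `|x - s'| <= `|v - k| + `|s' - s - k|.
      have -> : x - s' = (v - k) - (s' - s - k).
        by rewrite /v opprB addrA subrK opprB addrA subrK.
      by apply: ler_normB.
    lra.
  have hM : `|M x - M s - DM 1%N p [:: x - s]| <= c / 2 * `|x - s|.
    by apply: UM; lra.
  rewrite (Mzero Ss) subr0 -/v in hM.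
  have : `|DM 1%N p [:: v]| <= `|M x| + `|M x - DM 1%N p [:: v]|.
    by rewrite {1}(_ : DM 1%N p [:: v] = M x - (M x - DM 1%N p [:: v])) ?ler_normB // opprB addrC subrK.
  have : c / 2 * d <= c / 2 * `|v| by apply: ler_wpM2l => //; exact: ltW.
  have : c / 2 * `|v| + c / 2 * `|v| = c * `|v| by field.
  lra.
have h1 : Num.sqrt `|E x - E p| <= Num.sqrt CT * d.
  have -> : Num.sqrt CT * d = Num.sqrt (CT * d ^+ 2) by rewrite (sqrtrM (d ^+ 2) CT0) sqrtr_sqr ger0_norm.
  by apply: ler_wsqrtr.
have h2 : c / (2 * (Num.sqrt CT + 1)) * (Num.sqrt CT * d) <= c / 2 * d.
  have -> : c / (2 * (Num.sqrt CT + 1)) * (Num.sqrt CT * d) =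
    c / 2 * d * (Num.sqrt CT / (Num.sqrt CT + 1)) by field; lra.
  rewrite -[X in _ <= X]mulr1; apply: ler_wpM2l; first by apply: mulr_ge0 => //; exact: ltW.
  by rewrite ler_pdivrMr ?mul1r; lra.
apply: (le_trans _ Mbound); apply: (le_trans _ h2).
apply: ler_wpM2l => //.
by apply: ltW; rewrite divr_gt0 // mulr_gt0 // ltr_wpDl.
Qed.

End Main.


Unset Implicit Arguments. Set Strict Implicit. Set Printing Implicit Defensive.

Theorem corollary4 (R : realType) (X Y : completeNormedModType R)
  (j : Y -> X -> R) (U : set X) (E : X -> R) (DE : nat -> X -> seq X -> R)
  (M : X -> Y) (DM : nat -> X -> seq X -> Y) (xinf : X) :
  continuous_embedding_dual j ->
  open U -> U xinf ->
  deriv_data 2 U E DE ->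
  (forall v, DE 1%N xinf [:: v] = 0) ->
  deriv_data 1 U M DM ->
  gradient_map j U DE M ->
  morse_bott_at U DE xinf ->
  (exists X0 : set X, closed_complement (hessian_kernel DE xinf) X0) ->
  closed (range (fun v : X => DM 1%N xinf [:: v])) ->
  exists (Z sigma : R), [/\ 0 < Z, 0 < sigma, sigma <= 1 &
    forall x, U x -> `|x - xinf| < sigma ->
      Z * Num.sqrt `|E x - E xinf| <= `|M x| ].
Proof.
move=> Hj oU Up HE Hcrit HM Hgrad [_ [Vs [Ws [phi [psi [Dphi [F [Hchart HT]]]]]]]] _ Hran.
exact: (main_ineq Hj oU Up HE Hcrit HM Hgrad Hran Hchart HT).
Qed.
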